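(* Let $p$ be a prime, let $n\geq 1$ and $k\geq 1$ be integers, and let $q$ be an integer with $\gcd(q,p)=1$. Let $\Gamma_{p,n,q}$ be the directed graph whose vertex set is $\mathbb{Z}_{p^n}=\{0,1,\dots,p^n-1\}$ and whose edge set is $$E=\{(x,\, q^y \bmod p^n)\;:\; x\in\mathbb{Z}_{p^n},\ y\in\mathbb{Z}_{\geq 0},\ y\equiv x \pmod{p^n}\}.$$ Let $C_{p,n,q}(k)$ be the number of $k$-cycles with marked initial vertex in $\Gamma_{p,n,q}$, i.e. the number of sequences $(x_0,x_1,\dots,x_{k-1})$ of vertices such that $(x_i,x_{i+1})\in E$ for $0\leq i\leq k-2$ and $(x_{k-1},x_0)\in E$ (equivalently, $C_{p,n,q}(k)=\mathrm{trace}(A^k)$ where $A$ is the adjacency matrix of $\Gamma_{p,n,q}$). Then $C_{p,n,q}(k)\leq (p-1)^k$. Moreover, if $q$ is a primitive root modulo $p$, then $C_{p,n,q}(k)=(p-1)^k$.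
   Context: Here $q^y \bmod p^n$ denotes the representative of $q^y$ modulo $p^n$ in $\{0,1,\dots,p^n-1\}$. A $k$-cycle with marked initial vertex is counted as a closed walk of length $k$ (vertices may repeat, loops are allowed). *)

(* Defs.v *)
From HB Require Import structures.
From mathcomp Require Import all_boot all_order all_algebra.
From mathcomp Require Import boolp.
Set Implicit Arguments. Unset Strict Implicit. Unset Printing Implicit Defensive.
Import Order.TTheory GRing.Theory Num.Theory.

Local Open Scope ring_scope.

Definition gamma_edge (p n : nat) (q : int) (x z : 'I_(p ^ n)) : Prop :=
  exists y : nat, (y = x %[mod p ^ n])%N /\
    (nat_of_ord z)%:Z = ((q ^+ y) %% (p ^ n)%N%:Z)%Z.

Definition num_cycles (p n : nat) (q : int) (k : nat) : nat :=
  #|[set f : {ffun 'I_k -> 'I_(p ^ n)} |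
      `[< forall i : 'I_k, @gamma_edge p n q (f i) (f (ordS i)) >] ]|.

Definition primitive_root_mod (p : nat) (q : int) : Prop :=
  (q ^+ (p.-1) = 1 %[mod p%:Z])%Z /\
  (forall m : nat, (0 < m < p.-1)%N -> (q ^+ m != 1 %[mod p%:Z])%Z).

(* Main.v *)
Require Import Defs.
From mathcomp Require Import all_boot all_order all_algebra.
From mathcomp Require Import cyclic zify boolp.
Import GRing.Theory Num.Theory.

Lemma modz_dvd_aux (q : int) (d M : nat) : (d %| M)%N ->
  modz (modz q M%:Z) d%:Z = modz q d%:Z.
Proof.
move/dvdnP=> [c ->]; rewrite [in RHS](divz_eq q (c*d)%:Z) PoszM GRing.mulrA.
by rewrite modzMDl.
Qed.

Lemma int_pow_mod (q : int) (d M m : nat) : (d %| M)%N -> (0 < M)%N ->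
  modz (q ^+ m)%R d%:Z = Posz (((absz (modz q M%:Z)) ^ m) %% d)%N.
Proof.
move=> dM M0.
rewrite -modzXm -(@modz_dvd_aux q _ _ dM) modzXm.
have -> : modz q M%:Z = Posz (absz (modz q M%:Z)).
  rewrite gez0_abs // modz_ge0 //; lia.
by rewrite -modz_nat -[Posz (_ ^ _)]natz natrX natz.
Qed.

Lemma exp_congr a m t e e' : a ^ t = 1 %[mod m] -> e = e' %[mod t] ->
  a ^ e = a ^ e' %[mod m].
Proof.
move=> Ht He.
have E x : a ^ x = a ^ (x %% t) %[mod m].
  rewrite {1}(divn_eq x t) expnD expnM expnAC -modnMml -modnXm Ht modnXm exp1n.
  by rewrite modnMml mul1n.
by rewrite E He -E.
Qed.

Lemma cop_pn p n : prime p -> coprime (p ^ n) p.-1.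
Proof.
move=> pp; apply: coprimeXl; rewrite prime_coprime // gtnNdvd //;
  have := prime_gt1 pp; lia.
Qed.

Lemma chinese_modl_j p n j x s : prime p -> j <= n ->
  chinese (p ^ n) p.-1 x s = x %[mod p ^ j].
Proof.
move=> pp jn.
by rewrite -(modn_dvdm _ (dvdn_exp2l p jn)) chinese_modl ?cop_pn // modn_dvdm // dvdn_exp2l.
Qed.

Definition Gn (a p n s x : nat) := a ^ chinese (p ^ n) p.-1 x s %% p ^ n.

Lemma Gn_contract a p n s x x' j : prime p -> coprime a p -> j < n ->
  x = x' %[mod p ^ j] -> Gn a p n s x = Gn a p n s x' %[mod p ^ j.+1].
Proof.
move=> pp ap jn Hx; rewrite /Gn !modn_dvdm ?dvdn_exp2l //.
apply: (@exp_congr _ _ (p.-1 * p ^ j)).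
  by rewrite -(totient_pfactor pp (ltn0Sn j)) Euler_exp_totient // coprimeXr.
apply/eqP; rewrite mulnC chinese_remainder ?cop_pn //; apply/andP; split; apply/eqP.
  by rewrite (@chinese_modl_j p n j x s) ?(@chinese_modl_j p n j x' s) // ltnW.
by rewrite !chinese_modr ?cop_pn.
Qed.

Lemma close_all (k M : nat) (p n : nat)
  (HMn : M = p ^ n) (f g : {ffun 'I_k -> 'I_M}) :
  (forall i, f i = g i %[mod p ^ n]) -> f = g.
Proof.
move=> H; apply/ffunP => i; apply/val_inj.
by have := H i; rewrite -HMn !modn_small.
Qed.

Lemma fix_unique (k M : nat) (F : {ffun 'I_k -> 'I_M} -> {ffun 'I_k -> 'I_M}) (p n : nat)
  (HMn : M = p ^ n)
  (Hc : forall j (f g : {ffun 'I_k -> 'I_M}), j < n -> (forall i, f i = g i %[mod p ^ j]) ->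
    forall i, F f i = F g i %[mod p ^ j.+1]) f g : F f = f -> F g = g -> f = g.
Proof.
move=> Ff Fg.
suff H : forall j, j <= n -> forall i, f i = g i %[mod p ^ j].
  by apply: (@close_all k M p n HMn); apply: H.
elim=> [|j IH] jn i; first by rewrite expn0 !modn1.
by rewrite -Ff -Fg; apply: Hc => //; apply: IH; apply: ltnW.
Qed.

Lemma fix_exists (k M : nat) (F : {ffun 'I_k -> 'I_M} -> {ffun 'I_k -> 'I_M}) (p n : nat)
  (HMn : M = p ^ n)
  (Hc : forall j (f g : {ffun 'I_k -> 'I_M}), j < n -> (forall i, f i = g i %[mod p ^ j]) ->
    forall i, F f i = F g i %[mod p ^ j.+1]) f0 : F (iter n F f0) = iter n F f0.
Proof.
suff H : forall j, j <= n -> forall i, iter j F (F f0) i = iter j F f0 i %[mod p ^ j].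
  by rewrite -iterS iterSr; apply: (@close_all k M p n HMn); apply: H.
elim=> [|j IH] jn i; first by rewrite expn0 !modn1.
by rewrite !iterS; apply: Hc => //; apply: IH; apply: ltnW.
Qed.

Lemma ord_lemma a p c c' : prime p -> coprime a p ->
  (forall m, 0 < m < p.-1 -> a ^ m %% p != 1 %% p) -> a ^ p.-1 = 1 %[mod p] ->
  a ^ c = a ^ c' %[mod p] -> c = c' %[mod p.-1].
Proof.
move=> pp ap Hm Hp.
wlog le : c c' / c <= c'.
  move=> W; case: (leqP c c') => [|/ltnW] h E; first exact: W.
  by apply/esym/W.
move=> E; have a0 : 0 < a.
  case: a ap {Hm Hp E} => // ap; move: ap; rewrite /coprime gcd0n => /eqP p1.
  by move: (prime_gt1 pp); rewrite p1.
rewrite -(subnKC le) in E *; set d := c' - c in E *.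
have : p %| a ^ c * (a ^ d - 1).
  rewrite mulnBr muln1 -expnD -eqn_mod_dvd; first by apply/eqP; rewrite E.
  by rewrite expnD leq_pmulr // expn_gt0 a0.
rewrite Gauss_dvdr; last by rewrite coprime_sym coprimeXl.
rewrite -eqn_mod_dvd ?expn_gt0 ?a0 // => /eqP Ed.
have Ed' : a ^ (d %% p.-1) = 1 %[mod p].
  by rewrite -Ed; apply: exp_congr Hp _; rewrite modn_mod.
case: (posnP (d %% p.-1)) => [d0|dpos].
  by rewrite -modnDmr d0 addn0.
have := Hm (d %% p.-1); rewrite dpos ltn_pmod ?Ed' ?eqxx //.
  by move=> /(_ isT). by rewrite -subn1 subn_gt0 prime_gt1.
Qed.

Set Implicit Arguments. Unset Strict Implicit.
Definition G (p n a : nat) (HM : 0 < p ^ n) (s : nat) (x : 'I_(p ^ n)) : 'I_(p ^ n) :=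
  Ordinal (ltn_pmod (a ^ chinese (p ^ n) p.-1 x s) HM).

Definition T (p n k a : nat) (HM : 0 < p ^ n) (s : {ffun 'I_k -> 'I_(p.-1)})
  (f : {ffun 'I_k -> 'I_(p ^ n)}) : {ffun 'I_k -> 'I_(p ^ n)} :=
  [ffun i => G a HM (s (ord_pred i)) (f (ord_pred i))].

Lemma T_ordS (p n k a : nat) (HM : 0 < p ^ n) (s : {ffun 'I_k -> 'I_(p.-1)}) (f : {ffun 'I_k -> 'I_(p ^ n)}) (i : 'I_k) :
  T a HM s f (ordS i) = G a HM (s i) (f i).
Proof. by rewrite ffunE ordSK. Qed.

Lemma T_contract (p n k a : nat) (HM : 0 < p ^ n) (s : {ffun 'I_k -> 'I_(p.-1)}) : prime p -> coprime a p ->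
  forall j (f g : {ffun 'I_k -> 'I_(p ^ n)}), j < n ->
  (forall i, f i = g i %[mod p ^ j]) ->
  forall i, T a HM s f i = T a HM s g i %[mod p ^ j.+1].
Proof.
move=> pp ap j f g jn H i; rewrite !ffunE.
exact: (@Gn_contract a p n (s (ord_pred i)) (f (ord_pred i)) (g (ord_pred i)) j).
Qed.

Lemma edge_G p n q (HM : 0 < p ^ n) (x z : 'I_(p ^ n)) : prime p ->
  coprime (absz (modz q (p ^ n)%:Z)) p ->
  @gamma_edge p n q x z <->
  exists s : 'I_(p.-1), z = G (absz (modz q (p ^ n)%:Z)) HM s x.
Proof.
set a := absz (modz q (p ^ n)%:Z) => pp ap.
have Hp1 : 0 < p.-1 by rewrite -subn1 subn_gt0 prime_gt1.
have Hint y : modz (q ^+ y)%R (p ^ n)%:Z = Posz (a ^ y %% p ^ n) :=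
  @int_pow_mod q _ _ y (dvdnn _) HM.
split.
  case=> y [Hy Hz]; rewrite Hint in Hz.
  have Hz' : (z : nat) = a ^ y %% p ^ n by case: Hz.
  exists (Ordinal (ltn_pmod y Hp1)); apply/val_inj => /=; rewrite Hz'.
  apply: (@exp_congr _ _ (totient (p ^ n))).
    by rewrite Euler_exp_totient // coprimeXr.
  have E : y = chinese (p ^ n) p.-1 x (y %% p.-1) %[mod p ^ n * p.-1].
    apply/eqP; rewrite chinese_remainder ?cop_pn //; apply/andP; split; apply/eqP.
      by rewrite chinese_modl ?cop_pn // Hy.
    by rewrite chinese_modr ?cop_pn // modn_mod.
  have D : totient (p ^ n) %| p ^ n * p.-1.
    have [n0|npos] := posnP n; first by rewrite n0 expn0 (_ : totient 1 = 1) // dvd1n.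
    by rewrite totient_pfactor // mulnC dvdn_mul // dvdn_exp2l // leq_pred.
  by rewrite -(modn_dvdm y D) E modn_dvdm.
case=> s ->; exists (chinese (p ^ n) p.-1 x s); split.
  by rewrite chinese_modl ?cop_pn.
by rewrite Hint.
Qed.

Theorem theorem1 (p n k : nat) (q : int) :
  prime p -> (1 <= n)%N -> (1 <= k)%N -> coprimez q p%:Z ->
  (num_cycles p n q k <= (p.-1) ^ k)%N /\
  (primitive_root_mod p q -> num_cycles p n q k = (p.-1) ^ k).
Proof.
move=> pp n1 k1 cq.
have HM : 0 < p ^ n by rewrite expn_gt0 prime_gt0.
have pn : p %| p ^ n by rewrite -{1}(expn1 p) dvdn_exp2l.
set a := absz (modz q (p ^ n)%:Z).
have Hq m : modz (q ^+ m)%R p%:Z = Posz (a ^ m %% p) := @int_pow_mod q _ _ m pn HM.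
have ap : coprime a p.
  rewrite coprime_sym prime_coprime //; apply/negP => /eqP pa.
  have := Hq 1; rewrite expr1 expn1 pa => /dvdz_mod0P.
  rewrite dvdzE /= => pq.
  by move: cq; rewrite coprimezE coprime_sym prime_coprime // pq.
pose f0 : {ffun 'I_k -> 'I_(p ^ n)} := [ffun => Ordinal HM].
pose fp (s : {ffun 'I_k -> 'I_(p.-1)}) := iter n (T a HM s) f0.
have fpfix s : T a HM s (fp s) = fp s.
  exact: (@fix_exists k (p ^ n) (T a HM s) p n erefl (T_contract HM s pp ap)).
have fpuniq s f : T a HM s f = f -> f = fp s.
  move=> Tf; apply: (@fix_unique k (p ^ n) (T a HM s) p n erefl (T_contract HM s pp ap)) => //.
have Sdef : [set f : {ffun 'I_k -> 'I_(p ^ n)} |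
      `[< forall i : 'I_k, @gamma_edge p n q (f i) (f (ordS i)) >] ] =
    fp @: [set: {ffun 'I_k -> 'I_(p.-1)}].
  apply/setP => f; rewrite inE; apply/asboolP/imsetP.
    move=> He; have [sf Hs] := fin_all_exists (fun i => (edge_G HM (f i) (f (ordS i)) pp ap).1 (He i)).
    exists (finfun sf); first by rewrite inE.
    apply: fpuniq; apply/ffunP => j. by rewrite -{2}(ord_predK j) Hs !ffunE.
  case=> s _ ->; move=> i; apply/(edge_G HM _ _ pp ap); exists (s i).
  by rewrite -{1}(fpfix s) T_ordS.
have cardT : #|[set: {ffun 'I_k -> 'I_(p.-1)}]| = p.-1 ^ k.
  by rewrite cardsT card_ffun !card_ord.
rewrite /num_cycles Sdef; split.
  by rewrite -cardT leq_imset_card.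
case=> Hp1 Hprim; rewrite card_imset ?cardT // => s s' Es.
apply/ffunP => i.
have h1 := fpfix s; have h2 := fpfix s'; rewrite -Es in h2.
have E1 := T_ordS a HM s (fp s) i; rewrite h1 in E1.
have E2 := T_ordS a HM s' (fp s) i; rewrite h2 E1 in E2.
have Ev : Gn a p n (s i) (fp s i) = Gn a p n (s' i) (fp s i) by move/(congr1 val): E2.
apply/val_inj => /=; rewrite -(modn_small (ltn_ord (s i))) -(modn_small (ltn_ord (s' i))).
rewrite -(chinese_modr (cop_pn p n pp) (fp s i) (s i)) -(chinese_modr (cop_pn p n pp) (fp s i) (s' i)).
apply: (@ord_lemma a p _ _ pp ap).
- move=> m hm; have := Hprim m hm; rewrite /= Hq modz_nat.
  by apply: contra => /eqP ->.
- by move: Hp1; rewrite /= Hq modz_nat => -[].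
- by have := congr1 (modn^~ p) Ev; rewrite /Gn !modn_dvdm.
Qed.
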